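(* Let $p,q\in\mathcal{S}$, let $k^*=\arg\max_k q_k$, let $m\ge1$ and $\delta\in[0,\log(1/p_{k^*}))$. Consider the problem of minimizing $H(\Phi\|q^m)$ over probability distributions $\Phi$ on $[K]^m$ subject to $D_{\mathrm{KL}}(\Phi\|p^m)\le m\delta$. Its unique solution is the product distribution $\phi_\delta^m$, i.e. $\Phi(y^m)=\prod_{i=1}^m\phi_\delta(y_i)$, where $\phi_\delta=T(q,p,\alpha(\delta))$.
   Context: Fix $K\ge2$ and $\zeta\in(0,1/K)$. $\mathcal{S}$ is the set of probability vectors $p=(p_1,\dots,p_K)$ on $[K]=\{1,\dots,K\}$ with $p_k>\zeta$ for all $k$ and $p_k\neq p_{k'}$ for all $k\ne k'$. For $p\in\mathcal{S}$, $p^m$ denotes the product (memoryless) distribution $p^m(y^m)=\prod_{i=1}^m p_{y_i}$ on $[K]^m$. Cross entropy $H(a\|b)=\sum a\log(1/b)$, KL divergence $D_{\mathrm{KL}}(a\|b)=\sum a\log(a/b)$, natural logarithms. Mismatched tilt: for $\alpha\in\mathbb{R}$, $T(q,p,\alpha)_k=\frac{p_kq_k^\alpha}{\sum_{j}p_jq_j^\alpha}$. For $\delta\in[0,\log(1/p_{k^*}))$, $\alpha(\delta)$ denotes the unique $\alpha\ge0$ with $D_{\mathrm{KL}}(T(q,p,\alpha)\|p)=\delta$, and $\phi_\delta=T(q,p,\alpha(\delta))$. *)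

(* Defs.v *)
From HB Require Import structures.
From mathcomp Require Import all_boot all_order all_algebra.
From mathcomp Require Import all_classical all_reals.
From mathcomp Require Import exp.
Set Implicit Arguments. Unset Strict Implicit. Unset Printing Implicit Defensive.
Import Order.TTheory GRing.Theory Num.Theory.
Local Open Scope ring_scope.

Section Defs.
Variable R : realType.

Definition is_prob (A : finType) (a : A -> R) : Prop :=
  (forall x, 0 <= a x) /\ \sum_(x : A) a x = 1.

Definition inS (K : nat) (zeta : R) (p : 'I_K -> R) : Prop :=
  is_prob p /\ (forall k, zeta < p k) /\ (forall k k' : 'I_K, k != k' -> p k != p k').

Definition crossent (A : finType) (a b : A -> R) : R :=
  \sum_(x : A) a x * ln (1 / b x).

Definition KL (A : finType) (a b : A -> R) : R :=
  \sum_(x : A) a x * ln (a x / b x).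

Definition tilt (K : nat) (q p : 'I_K -> R) (alpha : R) : 'I_K -> R :=
  fun k => p k * q k `^ alpha / \sum_(j < K) p j * q j `^ alpha.

Definition prodist (K : nat) (m : nat) (p : 'I_K -> R) : {ffun 'I_m -> 'I_K} -> R :=
  fun y => \prod_(i < m) p (y i).

Definition unique_minimizer (A : Type) (feasible : A -> Prop) (f : A -> R) (x : A)
  (eqv : A -> A -> Prop) : Prop :=
  feasible x /\ forall y, feasible y -> eqv y x \/ f x < f y.

End Defs.
Arguments prodist {R K} m p y.

(* Main.v *)
Require Import Defs.
From HB Require Import structures.
From mathcomp Require Import all_boot all_order all_algebra.
From mathcomp Require Import all_classical all_reals.
From mathcomp Require Import exp.
From mathcomp Require Import all_analysis.
From mathcomp Require Import ring lra.
Import Order.TTheory GRing.Theory Num.Theory.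
Local Open Scope ring_scope.
Import numFieldNormedType.Exports.
Section S.
Variable R : realType.

Lemma gibbs_term {a b : R} : 0 <= a -> 0 < b ->
  a - b <= a * ln (a / b) /\ (a * ln (a / b) = a - b -> a = b).
Proof.
move=> a0 b0; have [->|apos] := eqVneq a 0.
  rewrite mul0r sub0r; split; first by rewrite oppr_le0 ltW.
  by move/eqP; rewrite eq_sym oppr_eq0 gt_eqF.
have ap : 0 < a by rewrite lt_def apos a0.
have hl : ln (a / b) = - ln (b / a).
  by rewrite -lnV ?invf_div // posrE divr_gt0.
have he : expR (ln (b / a)) = b / a by rewrite lnK // posrE divr_gt0.
have key : a - b = a * (1 - b / a) by rewrite mulrBr mulr1 mulrCA divff ?mulr1.
rewrite hl key; split.
  rewrite mulrN -mulrN ler_pM2l // lerBlDr -lerBlDl opprK addrC -{2}he.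
  by rewrite addrC; exact: expR_ge1Dx.
move=> /(mulfI apos) h.
have hu : 1 + ln (b / a) = b / a by rewrite -[ln _]opprK h; lra.
have : ln (b / a) = 0.
  apply/eqP; apply: contraT => hn; have := expR_gt1Dx hn.
  by rewrite he hu ltxx.
move/eqP; rewrite ln_eq0 ?divr_gt0 // => /eqP h1.
by rewrite (divr1_eq h1).
Qed.

Lemma gibbs (A : finType) (Phi Psi : A -> R) :
  (forall x, 0 <= Phi x) -> \sum_x Phi x = 1 ->
  (forall x, 0 < Psi x) -> \sum_x Psi x = 1 ->
  0 <= KL Phi Psi /\ (KL Phi Psi <= 0 -> forall x, Phi x = Psi x).
Proof.
move=> h0 h1 g0 g1.
have e : KL Phi Psi = \sum_x (Phi x * ln (Phi x / Psi x) - (Phi x - Psi x)).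
  rewrite sumrB sumrB h1 g1 subrr subr0 //.
have nn : forall x, 0 <= Phi x * ln (Phi x / Psi x) - (Phi x - Psi x).
  by move=> x; rewrite subr_ge0; case: (gibbs_term (h0 x) (g0 x)).
split; first by rewrite e; apply: sumr_ge0 => x _.
move=> hle x.
have hz : KL Phi Psi = 0 by apply/eqP; rewrite eq_le hle e sumr_ge0.
move: hz; rewrite e => /psumr_eq0P => /(_ (fun x _ => nn x)) /(_ x isT) /eqP.
rewrite subr_eq0 => /eqP hx.
by case: (gibbs_term (h0 x) (g0 x)) => _; apply.
Qed.

Lemma KL_shift (A : finType) (Phi P Psi g : A -> R) (c : R) :
  (forall x, 0 <= Phi x) -> \sum_x Phi x = 1 ->
  (forall x, 0 < P x) -> (forall x, 0 < Psi x) ->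
  (forall x, ln (Psi x) = ln (P x) + g x - c) ->
  KL Phi Psi = KL Phi P - \sum_x Phi x * g x + c.
Proof.
move=> h0 h1 P0 Psi0 hl.
have -> : c = \sum_x Phi x * c by rewrite -mulr_suml h1 mul1r.
rewrite /KL -sumrB -big_split; apply: eq_bigr => x _ /=.
have [->|hn] := eqVneq (Phi x) 0; first by rewrite !mul0r subrr addr0.
have hp : 0 < Phi x by rewrite lt_def hn h0.
rewrite !ln_div ?posrE // hl; ring.
Qed.

Lemma KL_self (A : finType) (Phi : A -> R) : KL Phi Phi = 0.
Proof.
rewrite /KL big1 // => x _.
have [->|hn] := eqVneq (Phi x) 0; first by rewrite mul0r.
by rewrite divff // ln1 mulr0.
Qed.

Lemma ln_prod (I : finType) (f : I -> R) : (forall i, 0 < f i) ->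
  ln (\prod_i f i) = \sum_i ln (f i).
Proof.
move=> hf.
suff [] : 0 < \prod_i f i /\ ln (\prod_i f i) = \sum_i ln (f i) by [].
apply: (big_rec2 (fun s p => 0 < p /\ ln p = s)); first by rewrite ln1.
move=> i s p _ [p0 <-]; split; first by rewrite mulr_gt0.
by rewrite lnM ?posrE.
Qed.

Lemma sum_prodist (K m : nat) (phi : 'I_K -> R) : \sum_k phi k = 1 ->
  \sum_y prodist m phi y = 1.
Proof.
move=> h; rewrite /prodist -(bigA_distr_bigA (fun (i : 'I_m) k => phi k)).
by rewrite big1.
Qed.

Lemma marg (K m : nat) (phi h : 'I_K -> R) : \sum_k phi k = 1 ->
  \sum_y prodist m phi y * \sum_i h (y i) = m%:R * \sum_k phi k * h k.
Proof.
move=> hphi.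
under eq_bigr do rewrite mulr_sumr.
rewrite exchange_big /=.
transitivity (\sum_(i < m) \sum_k phi k * h k); last first.
  by rewrite sumr_const card_ord mulr_natl.
apply: eq_bigr => i _.
have e : forall y : {ffun 'I_m -> 'I_K}, prodist m phi y * h (y i) =
   \prod_j (if j == i then phi (y j) * h (y j) else phi (y j)).
  move=> y; rewrite /prodist (bigD1 i) //= [RHS](bigD1 i) //= eqxx mulrAC.
  by congr (_ * _); apply: eq_bigr => j /negbTE ->.
under eq_bigr do rewrite e.
rewrite -(bigA_distr_bigA (fun j k => if j == i then phi k * h k else phi k)).
rewrite (bigD1 i) //= [X in _ * X]big1 ?mulr1.
  by apply: eq_bigr => k _; rewrite eqxx.
by move=> j /negbTE hj; under eq_bigr do rewrite hj.
Qed.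

Section Tilt.
Variables (K : nat) (p q : 'I_K -> R) (k0 : 'I_K).
Hypotheses (hp : forall k, 0 < p k) (hq : forall k, 0 < q k) (sp : \sum_k p k = 1).

Definition Zt (g : R) := \sum_j p j * q j `^ g.

Lemma powR_pos (x g : R) : 0 < x -> x `^ g = expR (g * ln x).
Proof. by move=> x0; rewrite /powR gt_eqF. Qed.

Lemma pq_pos g k : 0 < p k * q k `^ g.
Proof. by rewrite mulr_gt0 // powR_pos // expR_gt0. Qed.

Lemma Zt_pos g : 0 < Zt g.
Proof.
rewrite /Zt (bigD1 k0) //=.
have h1 := pq_pos g k0.
have h2 : 0 <= \sum_(i < K | i != k0) p i * q i `^ g.
  by apply: sumr_ge0 => i _; apply: ltW; apply: pq_pos.
lra.
Qed.

Lemma tilt_pos g k : 0 < tilt q p g k.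
Proof. by rewrite /tilt divr_gt0 // ?pq_pos //; apply: Zt_pos. Qed.

Lemma tilt_sum g : \sum_k tilt q p g k = 1.
Proof. by rewrite /tilt -mulr_suml divff // gt_eqF //; apply: Zt_pos. Qed.

Lemma ln_tilt g k : ln (tilt q p g k) = ln (p k) + g * ln (q k) - ln (Zt g).
Proof.
rewrite /tilt ln_div ?posrE ?pq_pos //; last exact: Zt_pos.
by rewrite lnM ?posrE ?ln_powR // powR_pos // expR_gt0.
Qed.

Definition mu g := \sum_k tilt q p g k * ln (q k).

Lemma KL_tilt_gen (Phi : 'I_K -> R) g : (forall k, 0 <= Phi k) -> \sum_k Phi k = 1 ->
  KL Phi (tilt q p g) = KL Phi p - g * \sum_k Phi k * ln (q k) + ln (Zt g).
Proof.
move=> h0 h1.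
rewrite (@KL_shift _ Phi p (tilt q p g) (fun k => g * ln (q k)) (ln (Zt g))) //.
- by rewrite mulr_sumr; congr (_ - _ + _); apply: eq_bigr => k _; rewrite mulrCA.
- exact: tilt_pos.
- exact: ln_tilt.
Qed.

Lemma f_formula g : KL (tilt q p g) p = g * mu g - ln (Zt g).
Proof.
have := KL_tilt_gen (tilt q p g) g (fun k => ltW (tilt_pos g k)) (tilt_sum g).
rewrite KL_self /mu => h; lra.
Qed.


Lemma prodist_pos (m : nat) (phi : 'I_K -> R) : (forall k, 0 < phi k) ->
  forall y, 0 < prodist m phi y.
Proof. by move=> h y; apply: prodr_gt0 => i _. Qed.

Lemma crossent_prod (m : nat) (Phi : {ffun 'I_m -> 'I_K} -> R) :
  crossent Phi (prodist m q) = - \sum_y Phi y * \sum_i ln (q (y i)).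
Proof.
rewrite /crossent -sumrN; apply: eq_bigr => y _.
rewrite div1r lnV ?posrE ?prodist_pos // ln_prod // mulrN //.
Qed.

Lemma opt (m : nat) (alpha delta : R) : 0 <= alpha -> KL (tilt q p alpha) p = delta ->
  unique_minimizer
    (fun Phi : {ffun 'I_m -> 'I_K} -> R =>
       is_prob Phi /\ KL Phi (prodist m p) <= m%:R * delta)
    (fun Phi => crossent Phi (prodist m q))
    (prodist m (tilt q p alpha))
    (fun Phi Psi => forall y, Phi y = Psi y).
Proof.
move=> a0 hd.
set phi := tilt q p alpha.
set Ps := prodist m phi.
have Ps0 : forall y, 0 < Ps y by apply: prodist_pos => k; apply: tilt_pos.
have Ps1 : \sum_y Ps y = 1 by apply: sum_prodist; apply: tilt_sum.
have P0 : forall y, 0 < prodist m p y by apply: prodist_pos.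
have lnPs : forall y, ln (Ps y) = ln (prodist m p y) +
    (fun y => alpha * \sum_i ln (q (y i))) y - m%:R * ln (Zt alpha).
  move=> y /=; rewrite /Ps /prodist !ln_prod //; last by move=> i; apply: tilt_pos.
  rewrite (eq_bigr (fun i => ln (p (y i)) + alpha * ln (q (y i)) - ln (Zt alpha))); last by move=> i _; rewrite /phi ln_tilt.
  rewrite sumrB big_split /= -mulr_sumr sumr_const card_ord mulr_natl //.
have shift : forall Phi : {ffun 'I_m -> 'I_K} -> R, is_prob Phi ->
    KL Phi Ps = KL Phi (prodist m p) + alpha * crossent Phi (prodist m q)
                + m%:R * ln (Zt alpha).
  move=> Phi [h0 h1].
  rewrite (@KL_shift _ Phi (prodist m p) Ps _ _ h0 h1 P0 Ps0 lnPs).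
  rewrite crossent_prod; congr (_ + _).
  rewrite mulrN mulr_sumr; congr (_ - _); apply: eq_bigr => y _.
  by rewrite mulrCA.
have Psprob : is_prob Ps by split => // y; apply: ltW.
have CPs : crossent Ps (prodist m q) = - (m%:R * mu alpha).
  by rewrite crossent_prod /Ps (@marg K m phi (fun k => ln (q k))) //; apply: tilt_sum.
have fa := f_formula alpha; rewrite hd in fa.
have KLPs : KL Ps (prodist m p) = m%:R * delta.
  have := shift Ps Psprob; rewrite KL_self CPs fa => h.
  have -> : KL Ps (prodist m p) = alpha * (m%:R * mu alpha) - m%:R * ln (Zt alpha).
    by move: h; rewrite mulrN; lra.
  by ring.
split; first by split => //; rewrite KLPs.
move=> Phi [Phip Phile].
have [lt|ge] := ltP (crossent Ps (prodist m q)) (crossent Phi (prodist m q)).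
  by right.
left.
have [h0 h1] := Phip.
have Psp : forall y, 0 < Ps y := Ps0.
have [_ heq] := @gibbs _ Phi Ps h0 h1 Ps0 Ps1.
apply: heq.
rewrite shift //.
have := shift Ps Psprob; rewrite KL_self => e.
have hm : alpha * (crossent Phi (prodist m q) - crossent Ps (prodist m q)) <= 0.
  by apply: mulr_ge0_le0 => //; rewrite subr_le0.
rewrite KLPs in e.
move: hm; rewrite mulrBr => hm.
lra.
Qed.

Lemma tilt_inj (k1 k2 : 'I_K) (a b : R) : q k1 != q k2 ->
  (forall k, tilt q p a k = tilt q p b k) -> a = b.
Proof.
move=> hne he.
have e1 := he k1; have e2 := he k2.
move: e1 e2 => /(congr1 (@ln R)) e1 /(congr1 (@ln R)) e2.
rewrite !ln_tilt in e1 e2.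
have hl : ln (q k1) - ln (q k2) != 0.
  rewrite subr_eq0; apply: contra hne => /eqP h.
  by apply/eqP; apply: ln_inj; rewrite ?posrE.
have : (a - b) * (ln (q k1) - ln (q k2)) = 0 by lra.
by move/eqP; rewrite mulf_eq0 (negbTE hl) orbF subr_eq0 => /eqP.
Qed.

Lemma f_strict (k1 k2 : 'I_K) (a b : R) : q k1 != q k2 -> 0 <= a -> a < b ->
  KL (tilt q p a) p < KL (tilt q p b) p.
Proof.
move=> hne a0 ab.
have pos : forall c d, c != d -> 0 < KL (tilt q p c) (tilt q p d).
  move=> c d cd.
  have [h0 h1] := @gibbs _ (tilt q p c) (tilt q p d) (fun k => ltW (tilt_pos c k))
     (tilt_sum c) (tilt_pos d) (tilt_sum d).
  rewrite lt_def h0 andbT; apply/negP => /eqP h.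
  have hle : KL (tilt q p c) (tilt q p d) <= 0 by rewrite h.
  have := h1 hle => /(@tilt_inj k1 k2 c d hne) hcd.
  by move: cd; rewrite hcd eqxx.
have eab := KL_tilt_gen (tilt q p a) b (fun k => ltW (tilt_pos a k)) (tilt_sum a).
have eba := KL_tilt_gen (tilt q p b) a (fun k => ltW (tilt_pos b k)) (tilt_sum b).
have pab := pos a b (negbT (lt_eqF ab)).
have pba := pos b a (negbT (gt_eqF ab)).
rewrite -/(mu a) in eab; rewrite -/(mu b) in eba.
rewrite !f_formula in eab eba *.
rewrite eab in pab; rewrite eba in pba.
nra.
Qed.


Lemma cont_pow (c : R) : 0 < c -> continuous (fun g : R => c `^ g).
Proof.
move=> c0 x.
have -> : (fun g => c `^ g) = (fun g => expR (g * ln c)).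
  by apply/funext => g; rewrite powR_pos.
apply: continuous_comp; last exact: continuous_expR.
by apply: continuousM; [exact: cvg_id | exact: cvg_cst].
Qed.

Lemma cont_Zt : continuous Zt.
Proof.
rewrite /Zt; apply: continuous_big; first exact: add_continuous.
move=> k _ x; apply: continuousM; [exact: cvg_cst | exact: cont_pow].
Qed.

Lemma cont_mu : continuous mu.
Proof.
rewrite /mu /tilt; apply: continuous_big; first exact: add_continuous.
move=> k _ y.
have h1 : {for y, continuous (fun g => p k * q k `^ g)}.
  exact: (continuousM (cvg_cst _) (@cont_pow (q k) (hq k) y)).
have h2 : {for y, continuous (fun g => (Zt g)^-1)}.
  by apply: continuousV; [rewrite gt_eqF //; apply: Zt_pos | exact: cont_Zt].
exact: (continuousM (continuousM h1 h2) (cvg_cst _)).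
Qed.

Lemma cont_f : continuous (fun g => KL (tilt q p g) p).
Proof.
have -> : (fun g => KL (tilt q p g) p) = (fun g => g * mu g - ln (Zt g)).
  by apply/funext => g; rewrite f_formula.
move=> x.
have h1 : {for x, continuous (fun g : R => g * mu g)}.
  apply: (continuousM (s:=id) (t:=mu)); [exact: cvg_id | exact: cont_mu].
have h2 : {for x, continuous (fun g : R => ln (Zt g))}.
  apply: (@continuous_comp _ _ _ Zt (@ln R)); first exact: cont_Zt.
  by apply: continuous_ln; apply: Zt_pos.
exact: (continuousB h1 h2).
Qed.


Lemma p_le1 k : p k <= 1.
Proof.
rewrite -sp (bigD1 k) //=.
have : 0 <= \sum_(i < K | i != k) p i by apply: sumr_ge0 => i _; apply: ltW.
lra.
Qed.

Lemma big_alpha (kstar : 'I_K) (delta : R) :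
  (forall k, q k <= q kstar) -> (forall k, k != kstar -> q k != q kstar) ->
  delta < - ln (p kstar) ->
  exists b, 0 <= b /\ delta <= KL (tilt q p b) p.
Proof.
move=> hmax hdist hd.
set ps := p kstar; set L := - ln ps.
have ps0 : 0 < ps by apply: hp.
set s := fun k => ln (q k) - ln (q kstar).
have hs : forall k, s k <= 0.
  by move=> k; rewrite /s subr_le0 ler_ln ?posrE.
have hs' : forall k, k != kstar -> s k < 0.
  move=> k hk; rewrite /s subr_lt0 ltr_ln ?posrE // lt_def hmax andbT.
  by rewrite eq_sym; exact: hdist.
have hs0 : s kstar = 0 by rewrite /s subrr.
set eps := (L - delta) * ps / (2 * K%:R + 1).
have hK : 0 < 2 * K%:R + 1 :> R.
  have : 0 <= K%:R :> R by [].
  lra.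
have eps0 : 0 < eps by rewrite /eps divr_gt0 // mulr_gt0 // subr_gt0.
set bk := fun k => Num.max 0 (2 * ln eps / s k).
set b := \sum_k bk k.
have bk0 : forall k, 0 <= bk k by move=> k; rewrite /bk le_max lexx.
have b0 : 0 <= b by apply: sumr_ge0.
have bbk : forall k, bk k <= b.
  move=> k; rewrite /b (bigD1 k) //=.
  have : 0 <= \sum_(i < K | i != k) bk i by apply: sumr_ge0.
  lra.
exists b; split => //.
have F1 : forall k, k != kstar -> b * s k / 2 <= ln eps.
  move=> k hk.
  have hsk := hs' k hk.
  have h1 : 2 * ln eps / s k <= b.
    apply: le_trans (bbk k); rewrite /bk le_max lexx orbT //.
  have h2 : 2 * ln eps / s k * s k = 2 * ln eps.
    by rewrite divfK // lt_eqF.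
  nra.
have E1 : forall k, k != kstar -> expR (b * s k / 2) <= eps.
  by move=> k hk; rewrite -[eps]lnK ?posrE // ler_expR; apply: F1.
set Z' := \sum_k p k * expR (b * s k).
have ZZ : Zt b = expR (b * ln (q kstar)) * Z'.
  rewrite /Zt /Z' mulr_sumr; apply: eq_bigr => k _.
  rewrite powR_pos // mulrCA -expRD /s; congr (_ * expR _); ring.
have Zge : ps <= Z'.
  rewrite /Z' (bigD1 kstar) //= hs0 mulr0 expR0 mulr1.
  have : 0 <= \sum_(i < K | i != kstar) p i * expR (b * s i).
    by apply: sumr_ge0 => i _; rewrite mulr_ge0 // ?expR_ge0 // ltW.
  rewrite /ps; lra.
have Z0 : 0 < Z' by apply: lt_le_trans Zge.
have Zle : Z' <= ps + eps.
  have : Z' <= \sum_k ((if k == kstar then p k else 0) + eps * p k).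
    apply: ler_sum => k _.
    have [->|hk] := eqVneq k kstar.
      rewrite hs0 mulr0 expR0 mulr1.
      have : 0 <= eps * p kstar by rewrite mulr_ge0 // ltW.
      lra.
    rewrite add0r [X in _ <= X]mulrC; apply: ler_wpM2l; first exact: ltW.
    apply: (le_trans _ (E1 k hk)); rewrite ler_expR.
    have := hs k; nra.
  rewrite big_split /= -mulr_sumr sp mulr1 (bigD1 kstar) //= eqxx big1 ?addr0 //.
  by move=> k /negbTE ->.
have lnZ : ln (Zt b) = b * ln (q kstar) + ln Z'.
  by rewrite ZZ lnM ?posrE ?expR_gt0 // expRK.
have lnT : forall k, ln (tilt q p b k) = ln (p k) + b * s k - ln Z'.
  move=> k; rewrite ln_tilt lnZ /s; ring.
have F5 : KL (tilt q p b) p = \sum_k tilt q p b k * (b * s k) - ln Z'.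
  have := @KL_shift _ (tilt q p b) p (tilt q p b) (fun k => b * s k) (ln Z')
    (fun k => ltW (tilt_pos b k)) (tilt_sum b) hp (tilt_pos b) lnT.
  rewrite KL_self => h; lra.
have F6 : forall k, tilt q p b k <= expR (b * s k) / ps.
  move=> k.
  rewrite -[tilt q p b k]lnK ?posrE ?tilt_pos // -[ps]lnK ?posrE // -expRB ler_expR.
  rewrite lnT.
  have : ln (p k) <= 0 by apply: ln_le0; apply: p_le1.
  have : ln ps <= ln Z' by rewrite ler_ln ?posrE.
  lra.
have F7 : forall k, - (2 * eps / ps) <= tilt q p b k * (b * s k).
  move=> k.
  have [->|hk] := eqVneq k kstar.
    rewrite hs0 mulr0 mulr0 oppr_le0 divr_ge0 // ?ltW //.
    by rewrite mulr_gt0.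
  have bs0 : b * s k <= 0 by rewrite mulr_ge0_le0 // hs.
  apply: le_trans (ler_wnM2r bs0 (F6 k)).
  set v := b * s k / 2.
  have hv : b * s k = 2 * v by rewrite /v; field.
  have ev : expR (b * s k) = expR v * expR v by rewrite -expRD hv; congr expR; ring.
  have hvexp : - 1 <= v * expR v.
    have h1 := expR_ge1Dx (- v).
    have h2 : expR (- v) * expR v = 1 by rewrite -expRD addNr expR0.
    have : 0 < expR v by apply: expR_gt0.
    nra.
  have Ev := E1 k hk; rewrite -/v in Ev.
  have ev0 : 0 < expR v by apply: expR_gt0.
  have : - 2 * eps <= expR (b * s k) * (b * s k).
    rewrite ev hv; nra.
  move=> h.
  have hi : 0 < ps^-1 by rewrite invr_gt0.
  move: h hi; set X := expR (b * s k) => h hi.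
  rewrite mulrAC; nra.
have F8 : - (K%:R * (2 * eps / ps)) <= \sum_k tilt q p b k * (b * s k).
  have : \sum_(k < K) - (2 * eps / ps) <= \sum_k tilt q p b k * (b * s k).
    by apply: ler_sum => k _; exact: F7.
  by rewrite sumr_const card_ord mulNrn (mulr_natl _ K).
have F9 : ln Z' <= ln ps + eps / ps.
  have : ln Z' <= ln (ps * (1 + eps / ps)).
    rewrite ler_ln ?posrE //; last by rewrite mulr_gt0 // addr_gt0 // divr_gt0.
    by rewrite mulrDr mulr1 mulrCA divff ?mulr1 // gt_eqF.
  rewrite lnM ?posrE //; last by rewrite addr_gt0 // divr_gt0.
  have := le_ln1Dx (x := eps / ps).
  have : -1 < eps / ps by have := divr_gt0 eps0 ps0; lra.
  move=> h1 h2; have := h2 h1; lra.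
rewrite F5.
have ee : (2 * K%:R + 1) * (eps / ps) = L - delta.
  by rewrite /eps; field; rewrite (lt0r_neq0 ps0) (lt0r_neq0 hK).
have : K%:R * (2 * eps / ps) + eps / ps = L - delta.
  by rewrite -ee; field; exact: lt0r_neq0.
rewrite /L in ee *; lra.
Qed.

End Tilt.
End S.

Theorem mainTheorem3 (R : realType) (K : nat) (zeta : R) (p q : 'I_K -> R)
  (kstar : 'I_K) (m : nat) (delta : R) :
  (2 <= K)%N -> 0 < zeta -> zeta < 1 / K%:R ->
  inS zeta p -> inS zeta q ->
  (forall k, q k <= q kstar) ->
  (1 <= m)%N ->
  0 <= delta -> delta < ln (1 / p kstar) ->
  exists alpha : R,
    [/\ 0 <= alpha,
        KL (tilt q p alpha) p = delta,
        (forall beta : R, 0 <= beta -> KL (tilt q p beta) p = delta -> beta = alpha) &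
        unique_minimizer
          (fun Phi : {ffun 'I_m -> 'I_K} -> R =>
             is_prob Phi /\ KL Phi (prodist m p) <= m%:R * delta)
          (fun Phi => crossent Phi (prodist m q))
          (prodist m (tilt q p alpha))
          (fun Phi Psi => forall y, Phi y = Psi y)].
Proof.
move=> hK z0 _ [[_ sp] [pz _]] [_ [qz qd]] hmax _ d0 dlt.
have hp : forall k, 0 < p k by move=> k; apply: lt_trans (pz k).
have hq : forall k, 0 < q k by move=> k; apply: lt_trans (qz k).
have hdist : forall k, k != kstar -> q k != q kstar by move=> k; apply: qd.
have K0 : (0 < K)%N by apply: leq_trans hK.
have K1 : (1 < K)%N by [].
set k1 : 'I_K := Ordinal K0.
set k2 : 'I_K := Ordinal K1.
have q12 : q k1 != q k2 by apply: qd.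
have dlt' : delta < - ln (p kstar) by rewrite div1r lnV ?posrE in dlt.
have [b [b0 hb]] := @big_alpha R K p q kstar hp hq sp kstar delta hmax hdist dlt'.
set f := fun g => KL (tilt q p g) p.
have f0 : f 0 = 0.
  rewrite /f (@f_formula R K p q kstar hp hq) mul0r sub0r.
  have -> : @Zt R K p q 0 = 1.
    by rewrite /Zt -sp; apply: eq_bigr => k _; rewrite powRr0 mulr1.
  by rewrite ln1 oppr0.
have [c hc fc] : exists2 c, c \in `[0, b] & f c = delta.
  apply: IVT => //.
    apply: continuous_subspaceT; exact: (@cont_f R K p q kstar hp hq).
  rewrite f0; apply/andP; split.
    by rewrite ge_min d0.
  by rewrite le_max hb orbT.
have c0 : 0 <= c by move: hc; rewrite in_itv /= => /andP [].
exists c; split => //.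
  move=> beta be0 hbe.
  have [lt|gt|//] := ltgtP beta c.
    have := @f_strict R K p q kstar hp hq k1 k2 _ _ q12 be0 lt.
    by rewrite /f in fc *; rewrite hbe fc ltxx.
  have := @f_strict R K p q kstar hp hq k1 k2 _ _ q12 c0 gt.
  by rewrite /f in fc *; rewrite hbe fc ltxx.
exact: (@opt R K p q kstar hp hq m c delta c0 fc).
Qed.
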